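(* Let $X$ be a topological space. Then the uniform space $(C(X),\mathcal{U}_\Gamma)$ is complete.
   Context: $C(X)$ is the set of continuous real-valued functions on $X$. $LSC(X,(0,1))$ is the set of lower semicontinuous functions $X\to(0,1)$. For $\epsilon\in LSC(X,(0,1))$ let $B(\epsilon)=\{(f,g)\in C(X)\times C(X): |f(x)-g(x)|<\epsilon(x)\ \forall x\in X\}$. The uniformity $\mathcal{U}_\Gamma$ on $C(X)$ is the uniformity having $\{B(\epsilon):\epsilon\in LSC(X,(0,1))\}$ as a base; it induces the graph topology on $C(X)$ (the topology with base the sets $\{f\in C(X): \text{graph}(f)\subset G\}$, $G$ open in $X\times\mathbb{R}$). *)

(* Defs.v *)
From Stdlib Require Import Reals.
Open Scope R_scope.

Record TopSpace := {
  carrier :> Type;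
  is_open : (carrier -> Prop) -> Prop;
  open_full : is_open (fun _ => True);
  open_inter : forall U V, is_open U -> is_open V -> is_open (fun x => U x /\ V x);
  open_union : forall (F : (carrier -> Prop) -> Prop),
      (forall U, F U -> is_open U) -> is_open (fun x => exists U, F U /\ U x)
}.

Definition R_open (U : R -> Prop) : Prop :=
  forall x, U x -> exists d, 0 < d /\ forall y, Rabs (y - x) < d -> U y.

Definition continuous_on {X : TopSpace} (f : X -> R) : Prop :=
  forall U, R_open U -> is_open X (fun x => U (f x)).

Definition CX (X : TopSpace) : Type := { f : X -> R | continuous_on f }.

Definition LSC01 {X : TopSpace} (e : X -> R) : Prop :=
  (forall x, 0 < e x /\ e x < 1) /\
  (forall r, is_open X (fun x => r < e x)).

Definition B {X : TopSpace} (e : X -> R) (f g : CX X) : Prop :=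
  forall x, Rabs (proj1_sig f x - proj1_sig g x) < e x.

Definition is_filter {T : Type} (F : (T -> Prop) -> Prop) : Prop :=
  F (fun _ => True) /\
  ~ F (fun _ => False) /\
  (forall A B, F A -> F B -> F (fun t => A t /\ B t)) /\
  (forall A B : T -> Prop, (forall t, A t -> B t) -> F A -> F B).

(* Cauchy filter for the uniformity U_Gamma (generated by the base B(eps)). *)
Definition cauchy_Gamma {X : TopSpace} (F : (CX X -> Prop) -> Prop) : Prop :=
  forall e, LSC01 e -> exists A, F A /\ forall f g, A f -> A g -> B e f g.

Definition converges_Gamma {X : TopSpace} (F : (CX X -> Prop) -> Prop) (f : CX X) : Prop :=
  forall e, LSC01 e -> F (fun g => B e f g).

Definition complete_Gamma (X : TopSpace) : Prop :=
  forall F : (CX X -> Prop) -> Prop,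
    is_filter F -> cauchy_Gamma F -> exists f, converges_Gamma F f.

(* Main.v *)
Require Import Defs.
From Stdlib Require Import Reals Lra Classical ClassicalEpsilon FunctionalExtensionality PropExtensionality.
Open Scope R_scope.

Lemma open_ext (X : TopSpace) (P Q : X -> Prop) :
  (forall x, P x <-> Q x) -> is_open X P -> is_open X Q.
Proof.
  intros H HP.
  assert (P = Q) as <-; [|exact HP].
  apply functional_extensionality; intro x; apply propositional_extensionality; apply H.
Qed.

Lemma open_empty (X : TopSpace) : is_open X (fun _ => False).
Proof.
  eapply open_ext; [|apply (open_union X (fun _ => False)); tauto].
  intro x; split; [firstorder|tauto].
Qed.

Lemma const_LSC (X : TopSpace) (c : R) : 0 < c < 1 -> @LSC01 X (fun _ => c).
Proof.
  intros Hc; split; [auto|].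
  intro r; destruct (Rlt_dec r c).
  - eapply open_ext; [|apply open_full]; intro; split; auto.
  - eapply open_ext; [|apply open_empty]; intro; split; [tauto|lra].
Qed.

Lemma half_LSC (X : TopSpace) (e : X -> R) : LSC01 e -> LSC01 (fun x => e x / 2).
Proof.
  intros [H1 H2]; split.
  - intro x; specialize (H1 x); lra.
  - intro r; eapply open_ext; [|apply (H2 (2*r))]; intro x; split; lra.
Qed.

Lemma ball_open (a r : R) : R_open (fun y => Rabs (y - a) < r).
Proof.
  intros x Hx; exists (r - Rabs (x - a)); split; [lra|].
  intros y Hy.
  pose proof (Rabs_triang (y - x) (x - a)).
  replace (y - x + (x - a)) with (y - a) in H by ring; lra.
Qed.

Definition cc (n : nat) : R := / (INR n + 2).

Lemma cc_pos n : 0 < cc n.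
Proof. unfold cc; apply Rinv_0_lt_compat; pose proof (pos_INR n); lra. Qed.

Lemma cc_lt1 n : cc n < 1.
Proof.
  unfold cc; pose proof (pos_INR n).
  rewrite <- Rinv_1; apply Rinv_lt_contravar; lra.
Qed.

Lemma cc_mono n m : (n <= m)%nat -> cc m <= cc n.
Proof.
  intro H; unfold cc; apply Rinv_le_contravar.
  - pose proof (pos_INR n); lra.
  - apply le_INR in H; lra.
Qed.

Lemma cc_small d : 0 < d -> exists N, forall n, (N <= n)%nat -> cc n < d.
Proof.
  intro Hd; destruct (archimed_cor1 d Hd) as [N [HN HN0]].
  exists N; intros n Hn.
  apply Rle_lt_trans with (cc N); [apply cc_mono; auto|].
  apply Rlt_trans with (/ INR N); [|auto].
  unfold cc; apply Rinv_lt_contravar.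
  - apply lt_0_INR in HN0; nra.
  - lra.
Qed.

Lemma filter_nonempty {T} (F : (T -> Prop) -> Prop) A :
  is_filter F -> F A -> exists t, A t.
Proof.
  intros [_ [Hne [_ Hup]]] HA.
  apply NNPP; intro Hn; apply Hne.
  apply (Hup A); [|auto].
  intros t Ht; apply Hn; eauto.
Qed.

Theorem proposition1p3 (X : TopSpace) : complete_Gamma X.
Proof.
  intros F HF HC.
  pose proof HF as HF'. destruct HF' as [_ [_ [Hint Hup]]].
  assert (Hseq : forall n, exists p : CX X * (CX X -> Prop),
    F (snd p) /\ forall k, snd p k -> forall x,
      Rabs (proj1_sig (fst p) x - proj1_sig k x) < cc n).
  { intro n.
    destruct (HC (fun _ => cc n) (const_LSC X _ (conj (cc_pos n) (cc_lt1 n))))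
      as [A [HA Hd]].
    destruct (filter_nonempty F A HF HA) as [f Hf].
    exists (f, A); simpl; split; auto.
    intros k Hk x; apply (Hd f k Hf Hk x). }
  pose (p := fun n => proj1_sig (constructive_indefinite_description _ (Hseq n))).
  assert (Hp : forall n, F (snd (p n)) /\ forall k, snd (p n) k -> forall x,
      Rabs (proj1_sig (fst (p n)) x - proj1_sig k x) < cc n).
  { intro n; unfold p; destruct constructive_indefinite_description; auto. }
  pose (fv := fun n x => proj1_sig (fst (p n)) x).
  assert (Hnm : forall n m x, Rabs (fv n x - fv m x) < cc n + cc m).
  { intros n m x.
    destruct (Hp n) as [Hn Hn'], (Hp m) as [Hm Hm'].
    destruct (filter_nonempty F _ HF (Hint _ _ Hn Hm)) as [k [Hk1 Hk2]].
    specialize (Hn' k Hk1 x); specialize (Hm' k Hk2 x); unfold fv.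
    pose proof (Rabs_triang (proj1_sig (fst (p n)) x - proj1_sig k x)
                            (proj1_sig k x - proj1_sig (fst (p m)) x)).
    rewrite <- Rabs_Ropp with (x := proj1_sig k x - proj1_sig (fst (p m)) x) in H.
    replace (proj1_sig (fst (p n)) x - proj1_sig k x +
             (proj1_sig k x - proj1_sig (fst (p m)) x))
      with (proj1_sig (fst (p n)) x - proj1_sig (fst (p m)) x) in H by ring.
    replace (- (proj1_sig k x - proj1_sig (fst (p m)) x))
      with (proj1_sig (fst (p m)) x - proj1_sig k x) in H by ring.
    lra. }
  assert (Hcau : forall x, Cauchy_crit (fun n => fv n x)).
  { intros x eps Heps.
    destruct (cc_small (eps/2)) as [N HN]; [lra|].
    exists N; intros n m Hn Hm; unfold Rdist.
    specialize (Hnm n m x); pose proof (HN n Hn); pose proof (HN m Hm).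
    lra. }
  pose (h := fun x => proj1_sig (R_complete _ (Hcau x))).
  assert (Hh : forall x, Un_cv (fun n => fv n x) (h x)).
  { intro x; unfold h; destruct R_complete; auto. }
  assert (Hbd : forall n x, Rabs (fv n x - h x) < 3 * cc n).
  { intros n x.
    destruct (Hh x (cc n) (cc_pos n)) as [N HN].
    specialize (HN (Nat.max N n) (Nat.le_max_l _ _)); unfold Rdist in HN.
    specialize (Hnm n (Nat.max N n) x).
    pose proof (cc_mono n (Nat.max N n) (Nat.le_max_r _ _)).
    pose proof (Rabs_triang (fv n x - fv (Nat.max N n) x) (fv (Nat.max N n) x - h x)).
    replace (fv n x - fv (Nat.max N n) x + (fv (Nat.max N n) x - h x))
      with (fv n x - h x) in H0 by ring.
    lra. }
  assert (Hcont : continuous_on h).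
  { intros U HU.
    eapply open_ext; [|apply (open_union X (fun W => is_open X W /\ forall x, W x -> U (h x)))];
      [|tauto].
    intro x; split.
    - intros [W [[_ HW] Wx]]; auto.
    - intro Ux.
      destruct (HU (h x) Ux) as [d [Hd Hd']].
      destruct (cc_small (d/7)) as [N HN]; [lra|].
      specialize (HN N (le_n N)).
      exists (fun y => Rabs (fv N y - fv N x) < d/7).
      split; [split|].
      + unfold fv; apply (proj2_sig (fst (p N)) (fun z => Rabs (z - proj1_sig (fst (p N)) x) < d/7)); apply ball_open.
      + intros y Hy; apply Hd'.
        pose proof (Hbd N x); pose proof (Hbd N y).
        pose proof (Rabs_triang (h y - fv N y) (fv N y - h x)).
        pose proof (Rabs_triang (fv N y - fv N x) (fv N x - h x)).
        rewrite Rabs_minus_sym with (x := h y) in H1.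
        replace (h y - fv N y + (fv N y - h x)) with (h y - h x) in H1 by ring.
        replace (fv N y - fv N x + (fv N x - h x)) with (fv N y - h x) in H2 by ring.
        lra.
      + rewrite Rminus_diag, Rabs_R0; lra. }
  exists (exist _ h Hcont).
  intros e He.
  destruct (HC _ (half_LSC X e He)) as [A [HA HAd]].
  apply (Hup A); [|auto].
  intros g Hg x; simpl.
  destruct He as [He1 _]; specialize (He1 x).
  destruct (cc_small (e x / 8)) as [N HN]; [lra|].
  specialize (HN N (le_n N)).
  destruct (Hp N) as [HN1 HN2].
  destruct (filter_nonempty F _ HF (Hint _ _ HA HN1)) as [k [Hk1 Hk2]].
  specialize (HAd g k Hg Hk1 x); simpl in HAd.
  specialize (HN2 k Hk2 x).
  pose proof (Hbd N x). fold (fv N x) in HN2.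
  pose proof (Rabs_triang (h x - fv N x) (fv N x - proj1_sig k x)).
  pose proof (Rabs_triang (h x - proj1_sig k x) (proj1_sig k x - proj1_sig g x)).
  rewrite Rabs_minus_sym with (x := h x) in H0.
  replace (h x - fv N x + (fv N x - proj1_sig k x)) with (h x - proj1_sig k x) in H0 by ring.
  replace (h x - proj1_sig k x + (proj1_sig k x - proj1_sig g x)) with (h x - proj1_sig g x) in H1 by ring.
  rewrite Rabs_minus_sym with (x := proj1_sig k x) in H1.
  lra.
Qed.
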